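(* Let $(\mathcal{G},\alpha)$ be an abstract GKM graph with vertex set $\mathcal{V}$. Call a subset $F\subseteq H_T^*(\mathcal{G})\setminus\{0\}$ with $fg=0$ for all distinct $f,g\in F$ and $|F|=|\mathcal{V}|$ a maximal collection. Then: (a) $\{\tau_p: p\in\mathcal{V}\}$ is a maximal collection; (b) every maximal collection is of the form $\{c_p\tau_p: p\in\mathcal{V}\}$ with $c_p\in H^*(BT)$; (c) these properties characterize $\{\tau_p\}_{p\in\mathcal{V}}$ up to signs: if $\{g_p\}_{p\in\mathcal{V}}$ is a maximal collection such that every maximal collection is obtained from it by multiplying each $g_p$ by an element of $H^*(BT)$, then $g_p=\pm\tau_p$ for every $p$ (after suitable indexing).
   Context: $H^*(BT)=\mathbb{Z}[x_1,\dots,x_r]$ with $\deg x_i=2$. Let $\mathcal{G}$ be a finite $n$-valent undirected graph (multiple edges allowed, no loops) with vertex set $\mathcal{V}$ and set of directed edges $\mathcal{E}$; for $e\in\mathcal{E}$, $\overline e$ is the reversed edge, $i(e),t(e)$ its initial and terminal vertices, and $\mathcal{E}_p=\{e: i(e)=p\}$. An axial function $\alpha:\mathcal{E}\to H^2(BT)$ satisfies: $\alpha(\overline e)=\pm\alpha(e)$; $\alpha(e),\alpha(e')$ linearly independent over $\mathbb{Z}$ if $e\ne e'$, $i(e)=i(e')$; coefficients of each $\alpha(e)$ have gcd $1$. An abstract GKM graph is such $(\mathcal{G},\alpha)$ admitting a parallel transport, i.e. bijections $\mathcal{P}_e:\mathcal{E}_{i(e)}\to\mathcal{E}_{t(e)}$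 with $\mathcal{P}_{\overline e}=\mathcal{P}_e^{-1}$, $\mathcal{P}_e(e)=\overline e$, $\alpha(\mathcal{P}_e(e'))-\alpha(e')\in\mathbb{Z}\alpha(e)$. Its graph equivariant cohomology is $H_T^*(\mathcal{G})=\{f:\mathcal{V}\to H^*(BT)\ :\ \alpha(e)\mid f(i(e))-f(t(e))\ \forall e\in\mathcal{E}\}$ with pointwise operations. The equivariant Thom class of $p\in\mathcal{V}$ is $\tau_p:\mathcal{V}\to H^*(BT)$, $\tau_p(p)=\prod_{e\in\mathcal{E}_p}\alpha(e)$, $\tau_p(q)=0$ for $q\ne p$; it lies in $H_T^{2n}(\mathcal{G})$. *)

(* Defs.v *)
From HB Require Import structures.
From mathcomp Require Import all_boot all_order all_algebra.
From mathcomp Require Import perm mpoly.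
Set Implicit Arguments. Unset Strict Implicit. Unset Printing Implicit Defensive.
Import Order.TTheory GRing.Theory Num.Theory.
Local Open Scope ring_scope.

(* H^*(BT) = Z[x_1, ..., x_r] (each x_i of degree 2). *)
Notation HBT r := {mpoly int[r]}.

(* Elements of H^2(BT) are integral linear forms, encoded by their
   coefficient vectors a : 'rV[int]_r;  lin a = \sum_i a_i x_i. *)
Definition lin (r : nat) (a : 'rV[int]_r) : HBT r :=
  \sum_(i < r) (a 0 i) *: 'X_i.

Definition coef_gcd (r : nat) (a : 'rV[int]_r) : int :=
  \big[gcdz/0%Z]_(i < r) a 0 i.

(* A finite graph: vertices V, directed edges E (both orientations of every
   undirected edge), i(e) = src e, t(e) = tgt e, reversal rev e = \bar e.
   Multiple edges allowed, no loops; n-valent. *)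
Definition nvalent_graph (n : nat) (V E : finType)
    (src tgt : E -> V) (rev : E -> E) : Prop :=
  [/\ forall e, rev (rev e) = e,
      forall e, src (rev e) = tgt e,
      forall e, src e != tgt e &
      forall p : V, #|[pred e | src e == p]| = n].

Definition axial_function (r : nat) (V E : finType)
    (src : E -> V) (rev : E -> E) (alpha : E -> 'rV[int]_r) : Prop :=
  [/\ forall e, alpha (rev e) = alpha e \/ alpha (rev e) = - alpha e,
      forall e e', e != e' -> src e = src e' ->
        forall a b : int, a *: alpha e + b *: alpha e' = 0 -> a = 0 /\ b = 0 &
      forall e, coef_gcd (alpha e) = 1].

(* Existence of a parallel transport: P e restricted to E_{i(e)} is a bijection
   onto E_{t(e)} with inverse P (rev e), P e e = rev e, and
   alpha(P e e') - alpha(e') \in Z alpha(e). *)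
Definition has_parallel_transport (r : nat) (V E : finType)
    (src tgt : E -> V) (rev : E -> E) (alpha : E -> 'rV[int]_r) : Prop :=
  exists P : E -> E -> E,
    [/\ forall e e', src e' = src e -> src (P e e') = tgt e,
        forall e e', src e' = src e -> P (rev e) (P e e') = e',
        forall e, P e e = rev e &
        forall e e', src e' = src e ->
          exists k : int, alpha (P e e') - alpha e' = k *: alpha e].

Definition abstract_GKM_graph (r n : nat) (V E : finType)
    (src tgt : E -> V) (rev : E -> E) (alpha : E -> 'rV[int]_r) : Prop :=
  [/\ nvalent_graph n src tgt rev,
      axial_function src rev alpha &
      has_parallel_transport src tgt rev alpha].

(* Graph equivariant cohomology H_T^*(G): membership predicate on functions
   V -> H^*(BT) (ring operations pointwise). *)
Definition in_HTG (r : nat) (V E : finType) (src tgt : E -> V)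
    (alpha : E -> 'rV[int]_r) (f : V -> HBT r) : Prop :=
  forall e, exists q : HBT r, f (src e) - f (tgt e) = lin (alpha e) * q.

Definition thom (r : nat) (V E : finType) (src : E -> V)
    (alpha : E -> 'rV[int]_r) (p : V) : V -> HBT r :=
  fun q => if q == p then \prod_(e | src e == p) lin (alpha e) else 0.

(* A maximal collection, given as a family {g_p}_{p in V} indexed by V
   (injective, so that the underlying set has exactly |V| elements),
   of nonzero elements of H_T^*(G) with pairwise zero products. *)
Definition maximal_collection (r : nat) (V E : finType) (src tgt : E -> V)
    (alpha : E -> 'rV[int]_r) (g : V -> V -> HBT r) : Prop :=
  [/\ forall p, in_HTG src tgt alpha (g p),
      forall p, g p <> (fun _ => 0),
      injective g &
      forall p q, p != q -> forall v, g p v * g q v = 0].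

(* Main.v *)
Require Import Defs.
From HB Require Import structures.
From mathcomp Require Import all_boot all_order all_algebra.
From mathcomp Require Import perm mpoly.
From Stdlib Require Import FunctionalExtensionality.
Import Order.TTheory GRing.Theory Num.Theory.
Local Open Scope ring_scope.
Set Implicit Arguments. Unset Strict Implicit. Unset Printing Implicit Defensive.

Section Alg.
Variable r : nat.
Notation P := {mpoly int[r]}.

Definition dv (a b : P) := exists q, b = a * q.
Definition primeP (l : P) := forall a b, dv l (a * b) -> dv l a \/ dv l b.

Lemma lin_coef (a : 'rV[int]_r) k : (lin a)@_U_(k) = a 0 k.
Proof.
rewrite /lin raddf_sum /= (bigD1 k) //= mcoeffZ mcoeffXU eqxx mulr1 big1 ?addr0 //.
by move=> i ne; rewrite mcoeffZ mcoeffXU (negbTE ne) mulr0.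
Qed.

Definition sub (M : 'M[int]_r) : r.-tuple P := [tuple lin (row i M) | i < r].
Definition sig M (p : P) : P := p \mPo sub M.

Lemma sig_lin M a : sig M (lin a) = lin (a *m M).
Proof.
rewrite /sig /lin raddf_sum /=.
under eq_bigr => i _ do rewrite comp_mpolyZ comp_mpolyXU -(tnth_nth 0) tnth_map tnth_ord_tuple.
under eq_bigr do rewrite scaler_sumr.
rewrite exchange_big; apply eq_bigr => k _; rewrite !mxE scaler_suml.
by apply eq_bigr => j _; rewrite !mxE scalerA.
Qed.

Lemma sig_comp M N p : sig N (sig M p) = sig (M *m N) p.
Proof.
rewrite /sig [p \mPo sub M]comp_mpolyE [p \mPo sub (M *m N)]comp_mpolyE raddf_sum /=; apply eq_bigr => m _.
rewrite comp_mpolyZ rmorph_prod /=; congr (_ *: _).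
apply eq_bigr => i _; rewrite rmorphXn /= !tnth_map !tnth_ord_tuple.
by have := sig_lin N (row i M); rewrite /sig => ->; rewrite row_mul.
Qed.

Lemma sig1 p : sig 1%:M p = p.
Proof.
rewrite /sig; have -> : sub 1%:M = [tuple 'X_i | i < r].
  apply eq_from_tnth => i; rewrite !tnth_map !tnth_ord_tuple /lin (bigD1 i) //=.
  rewrite big1 ?addr0; first by rewrite !mxE eqxx mulr1n scale1r.
  by move=> j ne; rewrite !mxE eq_sym (negbTE ne) mulr0n scale0r.
exact: comp_mpoly_id.
Qed.

Lemma sigK M : M \in unitmx -> forall p, sig (invmx M) (sig M p) = p.
Proof. by move=> U p; rewrite sig_comp mulmxV // sig1. Qed.

Lemma sigM M (a b : P) : sig M (a * b) = sig M a * sig M b.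
Proof. exact: rmorphM. Qed.

Lemma dv_sig M a b : dv a b -> dv (sig M a) (sig M b).
Proof. by case=> q ->; exists (sig M q); rewrite sigM. Qed.

Definition evt (i0 : 'I_r) : r.-tuple P := [tuple (if i == i0 then 0 else 'X_i) | i < r].
Definition ev i0 (p : P) : P := p \mPo evt i0.

Lemma dv_sum (I : Type) (s : seq I) (F : I -> P) a :
  (forall i, dv a (F i)) -> dv a (\sum_(i <- s) F i).
Proof.
move=> H; apply: (big_ind (dv a)); first by exists 0; rewrite mulr0.
  by move=> x y [q1 ->] [q2 ->]; exists (q1 + q2); rewrite mulrDr.
by move=> i _; apply: H.
Qed.

Lemma ev_ker i0 p : ev i0 p = 0 -> dv 'X_i0 p.
Proof.
move=> H; suff : dv 'X_i0 (p - ev i0 p) by rewrite H subr0.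
rewrite /ev {1}[p]mpolyE comp_mpolyEX -sumrB; apply dv_sum => m.
rewrite -scalerBr.
suff [q ->] : dv 'X_i0 ('X_[m] - ('X_[m] \mPo evt i0)).
  by exists (p@_m *: q); rewrite scalerAr.
rewrite comp_mpolyX (mpolyXE_id _ m) (bigD1 i0) //= [X in _ - X](bigD1 i0) //=.
rewrite tnth_map tnth_ord_tuple eqxx.
have -> : \prod_(i < r | i != i0) (tnth (evt i0) i) ^+ m i = \prod_(i < r | i != i0) 'X_i ^+ m i.
  by apply eq_bigr => i ne; rewrite tnth_map tnth_ord_tuple (negbTE ne).
case: (m i0) => [|k].
  by rewrite !expr0 !mul1r subrr; exists 0; rewrite mulr0.
by rewrite expr0n /= mul0r subr0 exprS -mulrA; eexists.
Qed.

Lemma ev_X i0 : ev i0 'X_i0 = 0.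
Proof. by rewrite /ev comp_mpolyXU -(tnth_nth 0) tnth_map tnth_ord_tuple eqxx. Qed.

Lemma ev_M i0 (a b : P) : ev i0 (a * b) = ev i0 a * ev i0 b.
Proof. exact: rmorphM. Qed.

Lemma X_prime i0 : primeP 'X_i0.
Proof.
move=> a b [q Hq]; have := congr1 (ev i0) Hq; rewrite !ev_M ev_X mul0r.
by move/eqP; rewrite mulf_eq0 => /orP [] /eqP /ev_ker; [left|right].
Qed.

Lemma ev_lin i0 a : ev i0 (lin a) = \sum_(i < r) a 0 i *: tnth (evt i0) i.
Proof.
rewrite /ev /lin raddf_sum /=; apply eq_bigr => i _.
by rewrite comp_mpolyZ comp_mpolyXU -(tnth_nth 0).
Qed.

Lemma ev_lin0 i0 a : ev i0 (lin a) = 0 -> forall k, k != i0 -> a 0 k = 0.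
Proof.
move=> H k nk; have := congr1 (mcoeff U_(k)) H.
rewrite ev_lin mcoeff0 raddf_sum /= (bigD1 k) //= big1 ?addr0.
  by rewrite tnth_map tnth_ord_tuple (negbTE nk) mcoeffZ mcoeffXU eqxx mulr1.
move=> i ni; rewrite tnth_map tnth_ord_tuple mcoeffZ.
by case: (i == i0); rewrite ?mcoeff0 ?mulr0 // mcoeffXU (negbTE ni) mulr0.
Qed.

Lemma gcd_pos (a : 'rV[int]_r) : coef_gcd a = 1 -> exists i0 : 'I_r, true.
Proof.
move=> g; case: (pickP (fun _ : 'I_r => true)) => [i _|none]; first by exists i.
by move: g; rewrite /coef_gcd big_pred0.
Qed.

Lemma NF (a : 'rV[int]_r) : coef_gcd a = 1 -> exists M i0 u, [/\ M \in unitmx, u * u = 1 &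
  forall k, (a *m M) 0 k = if k == i0 then u else 0].
Proof.
move=> g; have [i1 _] := gcd_pos g.
pose z : 'I_r := Ordinal (leq_ltn_trans (leq0n i1) (ltn_ord i1)).
case: (int_Smith_normal_form a) => L UL [R UR [d _ Ea]].
set D := \matrix_(i, j) _ in Ea.
have E2 : a *m invmx R = L *m D by rewrite Ea mulmxK.
have Ek : forall k, (a *m invmx R) 0 k = if k == z then L 0 0 * d`_0 else 0.
  move=> k; rewrite E2 !mxE big_ord1 mxE.
  case: (k =P z) => [->|nk] /=; first by rewrite mulr1n.
  suff -> : (0%N == k :> nat) = false by rewrite mulr0n mulr0.
  by apply/eqP => k0; apply: nk; apply: val_inj; rewrite /= -k0.
set u := L 0 0 * d`_0 in Ek *.
exists (invmx R), z, u; split; [by rewrite unitmx_inv | | exact: Ek].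
have du : forall j : 'I_r, (u %| a 0%R j)%Z.
  move=> j; have -> : a = a *m invmx R *m R by rewrite mulmxKV.
  rewrite mxE (bigD1 z) //= big1 ?addr0; first by rewrite Ek eqxx dvdz_mulr.
  by move=> k nk; rewrite Ek (negbTE nk) mul0r.
have : (u %| coef_gcd a)%Z.
  rewrite /coef_gcd; apply: (big_ind (fun x => (u %| x)%Z)) => //.
    by move=> x y hx hy; rewrite dvdz_gcd hx hy.
rewrite g dvdz1 => /eqP h.
have : `|u| = 1 by rewrite -abszE h.
by move=> hu; rewrite -expr2 -real_normK ?num_real // hu expr1n.
Qed.

Lemma lin_X (M : 'M[int]_r) (a : 'rV[int]_r) i0 u :
  (forall k, (a *m M) 0 k = if k == i0 then u else 0) -> lin (a *m M) = u *: 'X_i0.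
Proof.
move=> H; rewrite /lin (bigD1 i0) //= big1 ?addr0 => [|k nk]; first by rewrite H eqxx.
by rewrite H (negbTE nk) scale0r.
Qed.

Lemma sigZ (M : 'M[int]_r) c (p : P) : sig M (c *: p) = c *: sig M p.
Proof. exact: comp_mpolyZ. Qed.

Lemma lin_prime (a : 'rV[int]_r) : coef_gcd a = 1 -> primeP (lin a).
Proof.
move=> g; have [M [i0 [u [UM uu HM]]]] := NF g.
have hs : sig M (lin a) = u *: 'X_i0 by rewrite sig_lin (lin_X HM).
have hX : sig (invmx M) 'X_i0 = u *: lin a.
  by rewrite -[X in sig _ X]scale1r -uu -scalerA -hs sigZ sigK.
move=> x y H.
have H' : dv 'X_i0 (sig M x * sig M y).
  case: H => q Hq; exists (u *: sig M q).
  by rewrite -sigM Hq sigM hs -scalerAl scalerAr.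
case: (X_prime H') => [[q Hq]|[q Hq]]; [left|right]; exists (u *: sig (invmx M) q).
  by rewrite -(sigK UM x) Hq sigM hX -scalerAl scalerAr.
by rewrite -(sigK UM y) Hq sigM hX -scalerAl scalerAr.
Qed.

Lemma lin_ndv (a b : 'rV[int]_r) : coef_gcd a = 1 ->
  (forall c d : int, c *: a + d *: b = 0 -> c = 0 /\ d = 0) -> ~ dv (lin a) (lin b).
Proof.
move=> g ind [q Hq].
have [M [i0 [u [UM uu HM]]]] := NF g.
have := congr1 (fun p => ev i0 (sig M p)) Hq => /=.
rewrite sigM ev_M !sig_lin (lin_X HM).
have -> : ev i0 (u *: 'X_i0) = 0 by rewrite /ev comp_mpolyZ -/(ev i0 'X_i0) ev_X scaler0.
rewrite mul0r => /ev_lin0 H0.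
set t := (b *m M) 0 i0.
have E : b *m M = (t * u) *: (a *m M).
  apply/rowP => k; rewrite [RHS]mxE HM; case: (k =P i0) => [->|nk].
    by rewrite -mulrA uu mulr1.
  by rewrite mulr0 H0 //; apply/eqP.
have E2 : b = (t * u) *: a by rewrite -(mulmxK UM b) E -scalemxAl mulmxK.
have := ind (t * u) (-1); rewrite E2 scaleN1r addrN => /(_ erefl) [_ /eqP].
by rewrite oppr_eq0 oner_eq0.
Qed.

Lemma lin_eq0 (a : 'rV[int]_r) : coef_gcd a = 1 -> lin a != 0.
Proof.
move=> g; apply/eqP => H.
have z : forall k, a 0 k = 0 by move=> k; rewrite -lin_coef H mcoeff0.
move: g; rewrite /coef_gcd; apply/eqP.
suff /eqP -> : \big[gcdz/0]_(i < r) a 0 i == 0 by [].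
by apply: (big_ind (fun x : int => x == 0)) => // [x y /eqP -> /eqP ->|i _]; rewrite ?z.
Qed.

Lemma dv_prod_cancel (T : eqType) (s : seq T) (F : T -> P) l q :
  primeP l -> (forall x, x \in s -> ~ dv l (F x)) ->
  dv l ((\prod_(x <- s) F x) * q) -> dv l q.
Proof.
move=> pl; elim: s => [|x s IH] H; first by rewrite big_nil mul1r.
rewrite big_cons -mulrA => /pl [/(H x (mem_head _ _))//|].
by apply: IH => y ys; apply: H; rewrite inE ys orbT.
Qed.

Lemma dv_prod (T : eqType) (s : seq T) (F : T -> P) h : uniq s ->
  (forall x, x \in s -> primeP (F x)) ->
  (forall x y, x \in s -> y \in s -> x != y -> ~ dv (F x) (F y)) ->
  (forall x, x \in s -> dv (F x) h) -> dv (\prod_(x <- s) F x) h.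
Proof.
elim: s h => [|x s IH] h /=; first by move=> *; exists h; rewrite big_nil mul1r.
move=> /andP [xs us] pr nd hd.
have [q Hq] : dv (\prod_(y <- s) F y) h.
  apply: IH => // [y ys|y z ys zs yz|y ys]; first by apply: pr; rewrite inE ys orbT.
    by apply: nd => //; rewrite inE ?ys ?zs orbT.
  by apply: hd; rewrite inE ys orbT.
have : dv (F x) q.
  apply: (dv_prod_cancel (s := s) (F := F)); first by apply: pr; rewrite mem_head.
    move=> y ys; apply: nd; [exact: mem_head | by rewrite inE ys orbT | ].
    by apply/eqP => exy; move: xs; rewrite exy ys.
  by rewrite -Hq; apply: hd; rewrite mem_head.
by case=> q' Hq'; exists q'; rewrite big_cons Hq Hq' mulrA [_ * F x]mulrC.
Qed.

End Alg.

Section G.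
Variables (r n : nat) (V E : finType) (src tgt : E -> V) (rev : E -> E)
  (alpha : E -> 'rV[int]_r).
Hypothesis HG : abstract_GKM_graph n src tgt rev alpha.

Notation tau := (thom src alpha).

Let gr := let: And3 g _ _ := HG in g.
Let ax := let: And3 _ a _ := HG in a.
Lemma Hsrc e : src (rev e) = tgt e. Proof. by case: gr. Qed.
Lemma Hloop e : src e != tgt e. Proof. by case: gr. Qed.
Lemma Hpm e : alpha (rev e) = alpha e \/ alpha (rev e) = - alpha e. Proof. by case: ax. Qed.
Lemma Hind e e' : e != e' -> src e = src e' ->
        forall a b : int, a *: alpha e + b *: alpha e' = 0 -> a = 0 /\ b = 0.
Proof. by case: ax => _ H _; apply: H. Qed.
Lemma Hgcd e : coef_gcd (alpha e) = 1. Proof. by case: ax. Qed.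

Lemma tau_pp p : tau p p = \prod_(e | src e == p) lin (alpha e).
Proof. by rewrite /thom eqxx. Qed.

Lemma tau_off p q : q != p -> tau p q = 0.
Proof. by move=> h; rewrite /thom (negbTE h). Qed.

Lemma tau_nz p : tau p p != 0.
Proof. by rewrite tau_pp; apply/prodf_neq0 => e _; apply: lin_eq0; apply: Hgcd. Qed.

Lemma lin_opp (a : 'rV[int]_r) : lin (- a) = - lin a.
Proof. by rewrite /lin -sumrN; apply eq_bigr => i _; rewrite mxE scaleNr. Qed.

Lemma tau_HTG p : in_HTG src tgt alpha (tau p).
Proof.
move=> e; case: (src e =P p) => [Es|Ns].
  have Nt : tgt e != p by rewrite -Es eq_sym Hloop.
  exists (\prod_(e' | (src e' == p) && (e' != e)) lin (alpha e')).
  rewrite (tau_off Nt) subr0 Es tau_pp (bigD1 e) //=; by rewrite Es.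
case: (tgt e =P p) => [Et|Nt].
  have Ns' : src e != p by apply/eqP.
  have Er : src (rev e) == p by rewrite Hsrc Et.
  rewrite (tau_off Ns') sub0r Et tau_pp (bigD1 (rev e)) //=.
  case: (Hpm e) => ->; first by exists (- \prod_(e' | (src e' == p) && (e' != rev e)) lin (alpha e')); rewrite mulrN.
  by exists (\prod_(e' | (src e' == p) && (e' != rev e)) lin (alpha e')); rewrite lin_opp mulNr opprK.
have Ns' : src e != p by apply/eqP.
have Nt' : tgt e != p by apply/eqP.
by exists 0; rewrite (tau_off Ns') (tau_off Nt') subrr mulr0.
Qed.

Lemma thom_max : maximal_collection src tgt alpha tau.
Proof.
split.
- exact: tau_HTG.
- by move=> p H; have := tau_nz p; rewrite H eqxx.
- move=> p q H; have := congr1 (fun f => f p) H => /= Epq.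
  case: (q =P p) => // /eqP nqp; exfalso; move: (tau_nz p); rewrite Epq tau_off ?eqxx //; by rewrite eq_sym.
- move=> p q npq v; case: (v =P p) => [->|/eqP nvp]; last by rewrite (tau_off nvp) mul0r.
  by rewrite (tau_off (q := p) (p := q)) ?mulr0 // eq_sym.
Qed.

Lemma part_b (f : V -> V -> {mpoly int[r]}) : maximal_collection src tgt alpha f ->
  exists (c : V -> {mpoly int[r]}) (s : {perm V}),
    forall p, f p = (fun v => c (s p) * tau (s p) v).
Proof.
case=> fH fnz _ fprod.
have ex : forall p, exists v, f p v != 0.
  move=> p; case: (pickP (fun v => f p v != 0)) => [v hv|none]; first by exists v.
  exfalso; apply: (fnz p); apply: functional_extensionality => v.
  by have := none v; move/negbT; rewrite negbK => /eqP.
pose s0 p := xchoose (ex p).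
have s0P : forall p, f p (s0 p) != 0 by move=> p; exact: (xchooseP (ex p)).
have uq : forall p q v, f p v != 0 -> f q v != 0 -> p = q.
  move=> p q v hp hq; case: (p =P q) => // /eqP npq; exfalso.
  by have := fprod p q npq v; move/eqP; rewrite mulf_eq0 (negbTE hp) (negbTE hq).
have s0inj : injective s0.
  by move=> p q Epq; apply: (uq p q (s0 p)); [exact: s0P | rewrite Epq; exact: s0P].
pose s := perm s0inj.
have sE : forall p, s p = s0 p by apply: permE.
have supp : forall p w, f p w != 0 -> w = s p.
  move=> p w hw; have h := s0P ((s^-1)%g w).
  rewrite -sE permKV in h.
  by rewrite (uq p ((s^-1)%g w) w hw h) permKV.
have dvp : forall p, dv (tau (s p) (s p)) (f p (s p)).
  move=> p; rewrite tau_pp -big_filter; apply: dv_prod.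
  - by rewrite filter_uniq // index_enum_uniq.
  - by move=> e _; apply: lin_prime; apply: Hgcd.
  - move=> e e'; rewrite !mem_filter => /andP [/eqP se _] /andP [/eqP se' _] ne.
    by apply: lin_ndv; [apply: Hgcd | apply: Hind => //; rewrite se se'].
  - move=> e; rewrite mem_filter => /andP [/eqP se _].
    case: (fH p e) => q Hq; exists q; rewrite -se -Hq.
    suff -> : f p (tgt e) = 0 by rewrite subr0.
    apply/eqP; case: (f p (tgt e) =P 0) => // /eqP h; exfalso.
    by have := Hloop e; rewrite se (supp _ _ h) eqxx.
have exc : forall v, exists q, f ((s^-1)%g v) v == tau v v * q.
  by move=> v; case: (dvp ((s^-1)%g v)) => q; rewrite permKV => ->; exists q.
exists (fun v => xchoose (exc v)), s => p.
move: (xchoose (exc (s p))) (xchooseP (exc (s p))) => q; rewrite permK => /eqP hq.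
apply functional_extensionality => w.
case: (w =P s p) => [->|nw]; first by rewrite hq mulrC.
rewrite tau_off ?mulr0; last by apply/eqP.
by apply/eqP; case: (f p w =P 0) => // /eqP h; exfalso; apply: nw; apply: supp.
Qed.

Lemma int_unit (x y : int) : y * x = 1 -> x = 1 \/ x = -1.
Proof.
move=> h; have := intUnitRing.unitzPl h.
by rewrite qualifE => /orP [] /eqP ->; [left|right].
Qed.

Lemma part_c (g : V -> V -> {mpoly int[r]}) : maximal_collection src tgt alpha g ->
  (forall f : V -> V -> {mpoly int[r]},
     maximal_collection src tgt alpha f ->
     exists (c : V -> {mpoly int[r]}) (s : {perm V}),
       forall p, f p = (fun v => c (s p) * g (s p) v)) ->
  exists s : {perm V}, forall p,
    g p = tau (s p) \/ g p = (fun v => - tau (s p) v).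
Proof.
move=> gmax H.
have [c' [sg Hg]] := part_b gmax.
have [c [s Hs]] := H _ thom_max.
have key : forall p, sg (s p) = p /\ c (s p) * c' p = 1.
  move=> p; have := congr1 (fun f => f p) (Hs p) => /=; rewrite Hg /=.
  case: (sg (s p) =P p) => [Ep|NE].
    rewrite Ep => /eqP h; split => //; move: h.
    rewrite mulrA -{1}[tau p p]mul1r -subr_eq0 -mulrBl mulf_eq0 (negbTE (tau_nz p)) orbF subr_eq0.
    by move=> /eqP <-.
  rewrite (tau_off (p := sg (s p)) (q := p)) ?mulr0; last by apply/eqP => h; apply: NE.
  by move=> h; exfalso; move: (tau_nz p); rewrite h eqxx.
exists sg => q; pose p := (s^-1)%g q.
have qE : q = s p by rewrite /p permKV.
have [Ep U] := key p.
have := mpoly_intro_unit U; case/andP => /eqP E1 /unitrP [y [/int_unit hy _]].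
rewrite Hg qE Ep.
case: hy => hy; [left|right]; apply functional_extensionality => v; rewrite E1 hy.
  by rewrite mul1r.
by rewrite rmorphN /= mulN1r.
Qed.

End G.

Theorem proposition3p3 (r n : nat) (V E : finType)
    (src tgt : E -> V) (rev : E -> E) (alpha : E -> 'rV[int]_r)
    (HG : abstract_GKM_graph n src tgt rev alpha) :
  (* (a) the Thom classes form a maximal collection *)
  maximal_collection src tgt alpha (thom src alpha)
  (* (b) every maximal collection is {c_p tau_p : p in V} *)
  /\ (forall f : V -> V -> {mpoly int[r]},
        maximal_collection src tgt alpha f ->
        exists (c : V -> {mpoly int[r]}) (s : {perm V}),
          forall p, f p = (fun v => c (s p) * thom src alpha (s p) v))
  (* (c) characterization up to sign and reindexing *)
  /\ (forall g : V -> V -> {mpoly int[r]},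
        maximal_collection src tgt alpha g ->
        (forall f : V -> V -> {mpoly int[r]},
           maximal_collection src tgt alpha f ->
           exists (c : V -> {mpoly int[r]}) (s : {perm V}),
             forall p, f p = (fun v => c (s p) * g (s p) v)) ->
        exists s : {perm V}, forall p,
          g p = thom src alpha (s p) \/
          g p = (fun v => - thom src alpha (s p) v)).
Proof.
split; first exact: (thom_max HG).
split; first by move=> f hf; exact: (part_b HG hf).
by move=> g hg H; exact: (part_c HG hg H).
Qed.
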